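(* Let $\gamma:=2\Delta\lambda\max\{\lambda,\mu\}$ and $\nu:=(4\Delta\lambda\gamma)^d$. Then for all $\epsilon\in\mathbb R$, $\mathbf x\in\mathbb R^p$, $\mathbf b,\mathbf b'\in\mathbb R^V$ and $\mathbf w,\mathbf w'\in\mathbb R^E$ with $0\le\max\{\|\mathbf b-\mathbf b'\|_\infty,\|\mathbf w-\mathbf w'\|_\infty\}\le\epsilon\le1$, $$\|\mathfrak A(\mathbf x,\mathbf w,\mathbf b)-\mathfrak A(\mathbf x,\mathbf w',\mathbf b')\|_\infty\le\nu(\|\mathbf w\|_\infty+1)^d(\|\mathbf x\|_\infty+\|\mathbf b\|_\infty+1)\epsilon.$$
   Context: $\mathfrak A=(V,E,(\mathfrak a_v)_{v\in V})$ is an FNN architecture: $(V,E)$ is a finite dag and each $\mathfrak a_v:\mathbb R\to\mathbb R$ is Lipschitz continuous. Sources are input nodes $X_1,\dots,X_p$, sinks are output nodes $Y_1,\dots,Y_q$. For $\mathbf x\in\mathbb R^p$, $\mathbf w=(w_e)_{e\in E}$, $\mathbf b=(b_v)_{v\in V}$: $f_{\mathfrak A,X_i}=x_i$ and for non-input $v$, $f_{\mathfrak A,v}(\mathbf x,\mathbf w,\mathbf b)=\mathfrak a_v\big(b_v+\sum_{u:uv\in E}f_{\mathfrak A,u}(\mathbf x,\mathbf w,\mathbf b)w_{uv}\big)$; $\mathfrak A(\mathbf x,\mathbf w,\mathbf b)$ is the tuple of values at the outputs. $d$ is the depth of the dag, $\Delta\ge1$ its maximum in-degree, $\lambda\in\mathbb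 N_{>0}$ a Lipschitz constant for all $\mathfrak a_v$, and $\mu=\max_v\lceil|\mathfrak a_v(0)|\rceil$. *)

(* Defs.v *)
From HB Require Import structures.
From mathcomp Require Import all_boot all_order all_algebra.
From mathcomp Require Import reals.
Set Implicit Arguments. Unset Strict Implicit. Unset Printing Implicit Defensive.
Import Order.TTheory GRing.Theory Num.Theory.
Local Open Scope ring_scope.

Section FNN.
Variables (R : realType) (V : finType) (E : rel V).

Definition acyclic : Prop :=
  forall (v : V) (s : seq V), path E v s -> last v s = v -> s = [::].

Definition is_depth (d : nat) : Prop :=
  (exists (v : V) (s : seq V), path E v s /\ size s = d) /\
  (forall (v : V) (s : seq V), path E v s -> (size s <= d)%N).

Definition source (v : V) : bool := [forall u, ~~ E u v].
Definition sink (v : V) : bool := [forall u, ~~ E v u].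

Definition max_indeg : nat := \max_(v : V) #|[set u | E u v]|.

Definition mu_of (a : V -> R -> R) : nat :=
  \max_(v : V) `|Num.ceil `|a v 0%R| |%N.

Definition normV (b : V -> R) : R := \big[Num.max/0]_(v : V) `|b v|.
Definition normE (w : V -> V -> R) : R :=
  \big[Num.max/0]_(e : V * V | E e.1 e.2) `|w e.1 e.2|.
Definition normI (n : nat) (x : 'I_n -> R) : R := \big[Num.max/0]_(i < n) `|x i|.

Variables (a : V -> R -> R) (p q : nat) (inp : 'I_p -> V) (out : 'I_q -> V).

Definition in_val (x : 'I_p -> R) (v : V) : R :=
  if [pick i | inp i == v] is Some i then x i else 0.

(* k rounds of the recursive evaluation f_{A,v}; on a dag this is exact
   once k >= #|V| *)
Fixpoint eval_iter (k : nat) (x : 'I_p -> R) (w : V -> V -> R) (b : V -> R)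
    (v : V) : R :=
  match k with
  | 0 => 0
  | k'.+1 =>
      if [exists i, inp i == v] then in_val x v
      else a v (b v + \sum_(u | E u v) eval_iter k' x w b u * w u v)
  end.

Definition node_val x w b (v : V) : R := eval_iter #|V| x w b v.

Definition net (x : 'I_p -> R) (w : V -> V -> R) (b : V -> R) : 'I_q -> R :=
  fun j => node_val x w b (out j).

End FNN.

(* Main.v *)
Require Import Defs.
From HB Require Import structures.
From mathcomp Require Import all_boot all_order all_algebra.
From mathcomp Require Import reals.
From mathcomp Require Import ring lra.
Import Order.TTheory GRing.Theory Num.Theory.
Local Open Scope ring_scope.

Lemma bigmax_ge_aux (R : realType) (I : finType) (P : pred I) (F : I -> R) i :
  P i -> F i <= \big[Num.max/0]_(j | P j) F j.
Proof.
move=> Pi; rewrite -big_filter.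
have : i \in [seq j <- index_enum I | P j] by rewrite mem_filter Pi mem_index_enum.
elim: [seq j <- index_enum I | P j] => [//|j s IH].
rewrite big_cons in_cons => /orP [/eqP->|/IH H]; rewrite le_max ?lexx //.
by rewrite H orbT.
Qed.

Lemma bigmax_le_aux (R : realType) (I : finType) (P : pred I) (F : I -> R) c :
  0 <= c -> (forall i, P i -> F i <= c) -> \big[Num.max/0]_(j | P j) F j <= c.
Proof.
move=> c0 H; apply: (big_ind (fun y => y <= c)) => //.
by move=> y z Hy Hz; rewrite ge_max Hy Hz.
Qed.

Lemma bigmax_ge0_aux (R : realType) (I : finType) (P : pred I) (F : I -> R) :
  0 <= \big[Num.max/0]_(j | P j) `|F j|.
Proof.
apply: (big_ind (fun y => 0 <= y)) => //.
by move=> y z Hy Hz; rewrite le_max Hy.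
Qed.

Lemma sum_le_deg (R : realType) (V : finType) (E : rel V) (v : V) (F : V -> R) c
  (Delta : nat) :
  (#|[set u | E u v]| <= Delta)%N -> 0 <= c -> (forall u, E u v -> F u <= c) ->
  \sum_(u | E u v) F u <= Delta%:R * c.
Proof.
move=> Hd c0 H.
apply: (le_trans (ler_sum _ H)).
rewrite sumr_const -[c *+ _]mulr_natl.
apply: ler_wpM2r => //.
rewrite ler_nat; apply: leq_trans Hd.
by rewrite cardsE.
Qed.

Theorem lemma6p7 (R : realType) (V : finType) (E : rel V)
  (a : V -> R -> R) (p q : nat) (inp : 'I_p -> V) (out : 'I_q -> V)
  (d Delta lam : nat)
  (Hacyc : acyclic E)
  (Hinp : injective inp) (Hsrc : forall v, source E v <-> exists i, inp i = v)
  (Hout : injective out) (Hsnk : forall v, sink E v <-> exists j, out j = v)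
  (Hd : is_depth E d)
  (HDelta : Delta = max_indeg E) (HDelta1 : (1 <= Delta)%N)
  (Hlam : (0 < lam)%N)
  (Hlip : forall v (s t : R), `|a v s - a v t| <= lam%:R * `|s - t|) :
  let mu := mu_of a in
  let gamma := (2 * Delta * lam * maxn lam mu)%N in
  let nu := ((4 * Delta * lam * gamma) ^ d)%N in
  forall (eps : R) (x : 'I_p -> R) (b b' : V -> R) (w w' : V -> V -> R),
    0 <= Num.max (normV (fun v => b v - b' v))
                 (normE E (fun u v => w u v - w' u v)) ->
    Num.max (normV (fun v => b v - b' v))
            (normE E (fun u v => w u v - w' u v)) <= eps ->
    eps <= 1 ->
    normI (fun j => net E a inp out x w b j - net E a inp out x w' b' j)
      <= nu%:R * (normE E w + 1) ^+ d * (normI x + normV b + 1) * eps.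
Proof.
move=> mu gamma nu eps x b b' w w' H0 Heps Heps1.
have eps0 : 0 <= eps by apply: le_trans Heps.
have Hbb : forall v, `|b v - b' v| <= eps.
  move=> v; apply: le_trans Heps; rewrite le_max; apply/orP; left.
  exact: (@bigmax_ge_aux _ _ predT (fun v => `|b v - b' v|) v).
have Hww : forall u v, E u v -> `|w u v - w' u v| <= eps.
  move=> u v Euv; apply: le_trans Heps; rewrite le_max; apply/orP; right.
  exact: (@bigmax_ge_aux _ _ (fun e : V * V => E e.1 e.2)
            (fun e => `|w e.1 e.2 - w' e.1 e.2|) (u, v)).
set Wn := normE E w. set Bn := normV b. set Xn := normI x.
have Wn0 : 0 <= Wn by apply: bigmax_ge0_aux.
have Bn0 : 0 <= Bn by apply: bigmax_ge0_aux.
have Xn0 : 0 <= Xn by apply: bigmax_ge0_aux.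
have Hbv : forall v, `|b v| <= Bn.
  by move=> v; exact: (@bigmax_ge_aux _ _ predT (fun v => `|b v|) v).
have Hwv : forall u v, E u v -> `|w u v| <= Wn.
  move=> u v Euv.
  exact: (@bigmax_ge_aux _ _ (fun e : V * V => E e.1 e.2)
            (fun e => `|w e.1 e.2|) (u, v)).
have Hw'v : forall u v, E u v -> `|w' u v| <= Wn + 1.
  move=> u v Euv.
  have -> : w' u v = w u v - (w u v - w' u v) by ring.
  apply: le_trans (ler_normB _ _) _.
  by apply: lerD; [exact: Hwv | exact: le_trans (Hww _ _ Euv) Heps1].
have Hin : forall v, `|in_val inp x v| <= Xn.
  move=> v; rewrite /in_val; case: pickP => [i _|_]; last by rewrite normr0.
  exact: (@bigmax_ge_aux _ _ predT (fun i => `|x i|) i).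
have Hdeg : forall v, (#|[set u | E u v]| <= Delta)%N.
  by move=> v; rewrite HDelta /max_indeg; exact: (leq_bigmax (F := fun v => #|[set u | E u v]|) v).
have Hmu : forall v, `|a v 0| <= mu%:R.
  move=> v; apply: le_trans (ceil_ge _) _.
  have c0 : (0 <= Num.ceil `|a v 0|)%R by rewrite ceil_ge0 (lt_le_trans _ (normr_ge0 _)) // ltrN10.
  rewrite -(gez0_abs c0) -natr_absz ler_nat.
  rewrite /mu /mu_of.
  by rewrite (bigD1 v) //= leq_maxl.
have Hlip0 : forall v s, `|a v s| <= mu%:R + lam%:R * `|s|.
  move=> v s; have := Hlip v s 0; rewrite subr0 => H.
  have -> : a v s = a v 0 + (a v s - a v 0) by ring.
  by apply: le_trans (ler_normD _ _) _; apply: lerD.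
pose P v h := forall u s, path E u s -> last u s = v -> (size s <= h)%N.
have HP : forall v h u, P v h.+1 -> E u v -> P u h.
  move=> v h u Hv Euv u0 s Hp Hl.
  have := Hv u0 (rcons s v); rewrite rcons_path Hp Hl Euv last_rcons size_rcons.
  by move/(_ isT erefl).
have HP1 : forall v h, ~~ [exists i, inp i == v] -> P v h -> (0 < h)%N.
  move=> v h Hi Hv.
  have : ~~ source E v.
    apply/negP => /Hsrc [i Hiv]; move/negP: Hi; apply; apply/existsP; exists i.
    by rewrite Hiv.
  rewrite /source negb_forall => /existsP [u]; rewrite negbK => Euv.
  by have := Hv u [:: v]; rewrite /= Euv => /(_ isT erefl).
set W := Wn + 1. set M := Xn + Bn + 1.
have W1 : 1 <= W by rewrite /W lerDr.
have M1 : 1 <= M by rewrite /M lerDr addr_ge0.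
set L : R := lam%:R. set D : R := Delta%:R. set m : R := (maxn lam mu)%:R.
have L1 : 1 <= L by rewrite /L ler1n.
have D1 : 1 <= D by rewrite /D ler1n.
have Lm : L <= m by rewrite /L /m ler_nat leq_maxl.
have mum : mu%:R <= m by rewrite /m ler_nat leq_maxr.
set g : R := gamma%:R.
have gE : g = 2 * D * L * m by rewrite /g /gamma !natrM.
have m1 : 1 <= m by apply: le_trans Lm.
have L0 : 0 <= L := le_trans ler01 L1.
have D0 : 0 <= D := le_trans ler01 D1.
have m0 : 0 <= m := le_trans ler01 m1.
have W0 : 0 <= W := le_trans ler01 W1.
have M0 : 0 <= M := le_trans ler01 M1.
have g1 : 1 <= g.
  rewrite gE -!mulrA; apply: mulr_ege1; first by rewrite ler1n.
  by apply: mulr_ege1 => //; apply: mulr_ege1.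
have g0 : 0 <= g := le_trans ler01 g1.
have bound1 : forall k v h, P v h ->
    `|eval_iter E a inp k x w b v| <= g ^+ h * W ^+ h * M.
  elim=> [|k IH] v h Hv /=.
    by rewrite normr0 !mulr_ge0 // ?exprn_ge0 //.
  case: ifP => Hi.
    apply: le_trans (Hin v) _; apply: (@le_trans _ _ M); first by rewrite /M -addrA lerDl addr_ge0.
    apply: ler_peMl; first by [].
    by apply: mulr_ege1; apply: exprn_ege1.
  have := HP1 v h (negbT Hi) Hv; case: h Hv => [//|h] Hv _.
  apply: le_trans (Hlip0 _ _) _.
  set G := g ^+ h. set Q := W ^+ h.
  have G1 : 1 <= G by rewrite exprn_ege1.
  have Q1 : 1 <= Q by rewrite exprn_ege1.
  have G0 : 0 <= G := le_trans ler01 G1.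
  have Q0 : 0 <= Q := le_trans ler01 Q1.
  have HS : `|\sum_(u | E u v) eval_iter E a inp k x w b u * w u v|
            <= D * (G * Q * M * Wn).
    apply: le_trans (ler_norm_sum _ _ _) _.
    apply: sum_le_deg => //; first by rewrite !mulr_ge0 //.
    move=> u Euv; rewrite normrM; apply: ler_pM => //.
    - exact: IH (HP _ _ _ Hv Euv).
    - exact: Hwv.
  set T := G * Q * M * W.
  have T0 : M <= T.
    have GQ : 1 <= G * Q by apply: mulr_ege1.
    have : M <= G * Q * M by apply: ler_peMl => //.
    have : G * Q * M <= G * Q * M * W.
      by apply: ler_peMr => //; rewrite !mulr_ge0 //.
    by move=> H2 H1; rewrite /T; apply: le_trans H1 H2.
  have T0' : 0 <= T := le_trans M0 T0.
  have E1 : mu%:R + L * Bn <= m * M.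
    have : L * Bn <= m * Bn by apply: ler_wpM2r.
    have : 0 <= m * Xn by rewrite mulr_ge0 //.
    rewrite /M; nra.
  have E2 : m * M <= D * L * m * T.
    have H1 : m * M <= m * T by apply: ler_wpM2l => //.
    have H2 : m * T <= (D * L) * (m * T).
      by apply: ler_peMl; [rewrite mulr_ge0 //| apply: mulr_ege1].
    have -> : D * L * m * T = (D * L) * (m * T) by ring.
    exact: le_trans H1 H2.
  have E3 : L * (D * (G * Q * M * Wn)) <= D * L * m * T.
    have : G * Q * M * Wn <= T.
      by rewrite /T ler_wpM2l ?lerDl // !mulr_ge0 //.
    move=> H1.
    have : L * (D * (G * Q * M * Wn)) <= L * (D * T).
      apply: ler_wpM2l; first by [].
      by apply: ler_wpM2l; first by [].
    move=> H2; apply: le_trans H2 _.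
    have -> : D * L * m * T = m * (L * (D * T)) by ring.
    apply: ler_peMl => //; rewrite !mulr_ge0 //.
  have -> : g ^+ h.+1 * W ^+ h.+1 * M = 2 * (D * L * m * T).
    rewrite /T /G /Q !exprS; move: (g ^+ h) (W ^+ h) => z y; rewrite gE; ring.
  have : `|b v + \sum_(u | E u v) eval_iter E a inp k x w b u * w u v|
          <= Bn + D * (G * Q * M * Wn).
    by apply: le_trans (ler_normD _ _) _; apply: lerD.
  move=> H3.
  have : L * `|b v + \sum_(u | E u v) eval_iter E a inp k x w b u * w u v|
         <= L * (Bn + D * (G * Q * M * Wn)).
    by apply: ler_wpM2l => //.
  lra.
set n : R := (4 * Delta * lam * gamma)%:R.
have nE : n = 4 * D * L * g by rewrite /n /g /gamma !natrM.
have gn : g <= n.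
  rewrite nE; apply: ler_peMl; first by [].
  rewrite -!mulrA; apply: mulr_ege1; first by rewrite ler1n.
  by apply: mulr_ege1.
have n1 : 1 <= n := le_trans g1 gn.
have n0 : 0 <= n := le_trans ler01 n1.
have bound2 : forall k v h, P v h ->
    `|eval_iter E a inp k x w b v - eval_iter E a inp k x w' b' v|
      <= n ^+ h * W ^+ h * M * eps.
  elim=> [|k IH] v h Hv /=.
    rewrite subrr normr0 !mulr_ge0 // ?exprn_ge0 //.
  case: ifP => Hi.
    rewrite subrr normr0 !mulr_ge0 // ?exprn_ge0 //.
  have := HP1 v h (negbT Hi) Hv; case: h Hv => [//|h] Hv _.
  apply: le_trans (Hlip _ _ _) _.
  set G := g ^+ h. set Q := W ^+ h. set N := n ^+ h.
  have G1 : 1 <= G by rewrite exprn_ege1.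
  have Q1 : 1 <= Q by rewrite exprn_ege1.
  have G0 : 0 <= G := le_trans ler01 G1.
  have Q0 : 0 <= Q := le_trans ler01 Q1.
  have N1 : 1 <= N by rewrite exprn_ege1.
  have N0 : 0 <= N := le_trans ler01 N1.
  have GN : G <= N by apply: lerXn2r; rewrite ?nnegrE //.
  set T := N * Q * W * M * eps.
  have HT : forall u, E u v ->
     `|eval_iter E a inp k x w b u * w u v - eval_iter E a inp k x w' b' u * w' u v|
        <= G * Q * M * eps + N * Q * M * eps * W.
    move=> u Euv.
    set f := eval_iter E a inp k x w b u. set f' := eval_iter E a inp k x w' b' u.
    have -> : f * w u v - f' * w' u v = f * (w u v - w' u v) + (f - f') * w' u v by ring.
    apply: le_trans (ler_normD _ _) _; apply: lerD; rewrite normrM.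
      apply: ler_pM => //; last exact: Hww.
      exact: bound1 (HP _ _ _ Hv Euv).
    apply: ler_pM => //; last exact: Hw'v.
    exact: IH (HP _ _ _ Hv Euv).
  have HS := @sum_le_deg R V E v _ _ Delta (Hdeg v) _ HT.
  have T0 : 0 <= T by rewrite /T !mulr_ge0 //.
  have eT : eps <= T.
    have : 1 <= N * Q * W * M.
      apply: mulr_ege1 => //; apply: mulr_ege1 => //; apply: mulr_ege1 => //.
    by move=> H1; exact: ler_peMl eps0 H1.
  have GT : G * Q * M * eps <= T.
    have H1 : G * Q * M * eps <= N * Q * M * eps.
      apply: ler_wpM2r => //; apply: ler_wpM2r; first by [].
      by apply: ler_wpM2r; first by [].
    have H2 : N * Q * M * eps <= N * Q * M * eps * W.
      by apply: ler_peMr => //; rewrite !mulr_ge0 //.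
    have -> : T = N * Q * M * eps * W by rewrite /T; ring.
    exact: le_trans H1 H2.
  have NT : N * Q * M * eps * W = T by rewrite /T; ring.
  have HS2 : `|(b v - b' v) + \sum_(u | E u v)
      (eval_iter E a inp k x w b u * w u v - eval_iter E a inp k x w' b' u * w' u v)|
      <= eps + D * (T + T).
    apply: le_trans (ler_normD _ _) _; apply: lerD; first exact: Hbb.
    apply: le_trans (ler_norm_sum _ _ _) _.
    apply: le_trans (HS _) _; first by rewrite addr_ge0 // !mulr_ge0 //.
    by apply: ler_wpM2l; [by [] | rewrite NT; apply: lerD].
  rewrite (_ : forall s1 s2 s3 s4 : R, s1 + s2 - (s3 + s4) = (s1 - s3) + (s2 - s4));
    last by move=> *; ring.
  rewrite -sumrB.
  have H3 := ler_wpM2l (ltW (lt_le_trans ltr01 L1)) HS2.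
  apply: le_trans H3 _.
  have -> : n ^+ h.+1 * W ^+ h.+1 * M * eps = 4 * (g * (L * D * T)).
    rewrite /T /N /Q !exprS; move: (n ^+ h) (W ^+ h) => z y; rewrite nE; ring.
  have Y0 : 0 <= L * D * T by rewrite !mulr_ge0 //.
  have H4 : L * D * T <= g * (L * D * T) by apply: ler_peMl.
  have H5 : L * eps <= L * D * T.
    rewrite -mulrA; apply: ler_wpM2l; first by [].
    by apply: le_trans eT _; apply: ler_peMl.
  have -> : L * (eps + D * (T + T)) = L * eps + 2 * (L * D * T) by ring.
  lra.
move=> {bound1}.
rewrite /nu natrX -/n.
apply: bigmax_le_aux.
  rewrite !mulr_ge0 // ?exprn_ge0 //.
move=> j _; rewrite /net /node_val.
apply: bound2 => u s Hp _; exact: Hd.2 u s Hp.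
Qed.
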